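(* For any two configurations $A,B\in\mathcal{F}_2$, there exists a feasible schedule $M$ from $A$ to $B$ over some interval $[t_0,t_1]$ of minimum makespan that does not repeat an ordering: for each of the four orderings $O$, the set $\{t\in[t_0,t_1]: M(t)\in O\}$ is empty or an interval (equivalently, the sequence of orderings visited by $M$ is a simple path in the transition graph).
   Context: Robots are axis-parallel unit squares: a robot at $p$ occupies $p+\boxdot$, $\boxdot=\{q:\|q\|_\infty\le1/2\}$. Distances use the $L_1$ norm. A configuration of two robots is a pair $(p_1,p_2)$ with $\|p_1-p_2\|_\infty\ge 1$; $\mathcal{F}_2$ is their set. A trajectory over $T=[t_0,t_1]$ is a $1$-Lipschitz (w.r.t. $L_1$) map $m:T\to\mathbb{R}^2$ with polygonal-chain image; a schedule $M=(m_1,m_2)$ is feasible if $M(t)\in\mathcal{F}_2$ for all $t$; its makespan is $t_1-t_0$. The four orderings are $\mathcal{F}_2^{\rightarrow}=\{(p_1,p_2)\in\mathcal{F}_2: x(p_1)\ge x(p_2)+1\}$, $\mathcal{F}_2^{\leftarrow}=\{x(p_2)\ge x(p_1)+1\}$, $\mathcal{F}_2^{\uparrow}=\{y(p_1)\ge y(p_2)+1\}$, $\mathcal{F}_2^{\downarrow}=\{y(p_2)\ge y(p_1)+1\}$; they cover $\mathcal{F}_2$. The transition graph is the intersection graph of the four orderings (a four-cycle: each horizontal ordering intersects each vertical one). *)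

(* Defs.v *)
From Stdlib Require Import Reals.
Open Scope R_scope.

Definition pt := (R * R)%type.

Definition dist1 (p q : pt) : R := Rabs (fst p - fst q) + Rabs (snd p - snd q).
Definition distinf (p q : pt) : R := Rmax (Rabs (fst p - fst q)) (Rabs (snd p - snd q)).

Definition config := (pt * pt)%type.

(* F_2 : robots (unit squares) do not overlap *)
Definition F2 (c : config) : Prop := distinf (fst c) (snd c) >= 1.

Definition ord_right (c : config) : Prop := fst (fst c) >= fst (snd c) + 1.
Definition ord_left  (c : config) : Prop := fst (snd c) >= fst (fst c) + 1.
Definition ord_up    (c : config) : Prop := snd (fst c) >= snd (snd c) + 1.
Definition ord_down  (c : config) : Prop := snd (snd c) >= snd (fst c) + 1.

Definition seg_pt (a b : pt) (l : R) : pt :=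
  ((1 - l) * fst a + l * fst b, (1 - l) * snd a + l * snd b).

Definition polygonal_image (m : R -> pt) (t0 t1 : R) : Prop :=
  exists (k : nat) (q : nat -> pt),
    forall p : pt,
      (exists t, t0 <= t <= t1 /\ m t = p) <->
      (exists (i : nat) (l : R), (i <= k)%nat /\ 0 <= l <= 1 /\ p = seg_pt (q i) (q (S i)) l).

Definition trajectory (m : R -> pt) (t0 t1 : R) : Prop :=
  (forall s t, t0 <= s <= t1 -> t0 <= t <= t1 -> dist1 (m s) (m t) <= Rabs (s - t))
  /\ polygonal_image m t0 t1.

Definition feasible_schedule (m1 m2 : R -> pt) (t0 t1 : R) (A B : config) : Prop :=
  t0 <= t1 /\
  trajectory m1 t0 t1 /\ trajectory m2 t0 t1 /\
  (forall t, t0 <= t <= t1 -> F2 (m1 t, m2 t)) /\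
  (m1 t0, m2 t0) = A /\ (m1 t1, m2 t1) = B.

Definition is_interval (S : R -> Prop) : Prop :=
  forall a b c, S a -> S b -> a <= c <= b -> S c.

Definition no_repeat_ordering (m1 m2 : R -> pt) (t0 t1 : R) (O : config -> Prop) : Prop :=
  let S := fun t => t0 <= t <= t1 /\ O (m1 t, m2 t) in
  (forall t, ~ S t) \/ is_interval S.

(* Main.v *)
Require Import Defs.
From Stdlib Require Import Reals Lra Lia Classical ClassicalEpsilon.
Require Coquelicot.Compactness.
Open Scope R_scope.


Lemma dist1_sym p q : dist1 p q = dist1 q p.
Proof. unfold dist1. rewrite (Rabs_minus_sym (fst p)), (Rabs_minus_sym (snd p)). reflexivity. Qed.

Lemma dist1_tri p q r : dist1 p r <= dist1 p q + dist1 q r.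
Proof.
  unfold dist1.
  pose proof (Rabs_triang (fst p - fst q) (fst q - fst r)).
  pose proof (Rabs_triang (snd p - snd q) (snd q - snd r)).
  replace (fst p - fst r) with ((fst p - fst q) + (fst q - fst r)) by ring.
  replace (snd p - snd r) with ((snd p - snd q) + (snd q - snd r)) by ring.
  lra.
Qed.

Lemma dist1_ge0 p q : 0 <= dist1 p q.
Proof. unfold dist1. pose proof (Rabs_pos (fst p - fst q)). pose proof (Rabs_pos (snd p - snd q)). lra. Qed.

Lemma dist1_refl p : dist1 p p = 0.
Proof. unfold dist1. rewrite !Rminus_diag, Rabs_R0. ring. Qed.

Lemma dist1_x p q : Rabs (fst p - fst q) <= dist1 p q.
Proof. unfold dist1. pose proof (Rabs_pos (snd p - snd q)). lra. Qed.
Lemma dist1_y p q : Rabs (snd p - snd q) <= dist1 p q.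
Proof. unfold dist1. pose proof (Rabs_pos (fst p - fst q)). lra. Qed.

Lemma dist1_zero p q : dist1 p q <= 0 -> p = q.
Proof.
  intro H. pose proof (Rabs_pos (fst p - fst q)). pose proof (Rabs_pos (snd p - snd q)).
  unfold dist1 in H.
  assert (Rabs (fst p - fst q) = 0) by lra. assert (Rabs (snd p - snd q) = 0) by lra.
  assert (E : forall x, Rabs x = 0 -> x = 0).
  { intros x Hx. destruct (Rcase_abs x); [rewrite Rabs_left in Hx|rewrite Rabs_right in Hx]; lra. }
  apply E in H2. apply E in H3.
  destruct p, q; simpl in *. f_equal; lra.
Qed.

Lemma seg_pt_same p l : seg_pt p p l = p.
Proof. destruct p; unfold seg_pt; simpl. f_equal; ring. Qed.

Lemma seg_pt_0 p q : seg_pt p q 0 = p.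
Proof. destruct p; unfold seg_pt; simpl. f_equal; ring. Qed.
Lemma seg_pt_1 p q : seg_pt p q 1 = q.
Proof. destruct p, q; unfold seg_pt; simpl. f_equal; ring. Qed.

Lemma dist1_seg p q l1 l2 : dist1 (seg_pt p q l1) (seg_pt p q l2) = Rabs (l1 - l2) * dist1 p q.
Proof.
  unfold dist1, seg_pt; simpl.
  replace ((1 - l1) * fst p + l1 * fst q - ((1 - l2) * fst p + l2 * fst q)) with ((l1 - l2) * (fst q - fst p)) by ring.
  replace ((1 - l1) * snd p + l1 * snd q - ((1 - l2) * snd p + l2 * snd q)) with ((l1 - l2) * (snd q - snd p)) by ring.
  rewrite !Rabs_mult, (Rabs_minus_sym (fst q)), (Rabs_minus_sym (snd q)). ring.
Qed.

Inductive Ord := oR | oU | oL | oD.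

Definition ell (j : Ord) (c : config) : R :=
  match j with
  | oR => fst (fst c) - fst (snd c)
  | oU => snd (fst c) - snd (snd c)
  | oL => fst (snd c) - fst (fst c)
  | oD => snd (snd c) - snd (fst c)
  end.

Definition inO (j : Ord) (c : config) : Prop := 1 <= ell j c.

Definition next (j : Ord) : Ord := match j with oR => oU | oU => oL | oL => oD | oD => oR end.
Definition prev (j : Ord) : Ord := match j with oR => oD | oU => oR | oL => oU | oD => oL end.
Definition step (e : bool) (j : Ord) : Ord := if e then next j else prev j.

Lemma ell_opp j c : ell (next (next j)) c = - ell j c.
Proof. destruct j; simpl; ring. Qed.
Lemma ell_prev j c : ell (prev j) c = - ell (next j) c.
Proof. destruct j; simpl; ring. Qed.
Lemma step_back e j : step (negb e) (step e j) = j.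
Proof. destruct e, j; reflexivity. Qed.

Lemma F2_inO c : F2 c -> exists j, inO j c.
Proof.
  unfold F2, distinf, inO. intro H.
  destruct c as [[x1 y1] [x2 y2]]; simpl in *.
  unfold Rmax in H. destruct (Rle_dec _ _) as [_|_].
  - destruct (Rcase_abs (y1 - y2)) as [h|h].
    + rewrite Rabs_left in H by lra. exists oD. simpl. lra.
    + rewrite Rabs_right in H by lra. exists oU. simpl. lra.
  - destruct (Rcase_abs (x1 - x2)) as [h|h].
    + rewrite Rabs_left in H by lra. exists oL. simpl. lra.
    + rewrite Rabs_right in H by lra. exists oR. simpl. lra.
Qed.

Lemma inO_F2 j c : inO j c -> F2 c.
Proof.
  unfold F2, distinf, inO. intro H.
  destruct c as [[x1 y1] [x2 y2]]; destruct j; simpl in *.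
  - eapply Rge_trans. apply Rle_ge, Rmax_l. rewrite Rabs_right; lra.
  - eapply Rge_trans. apply Rle_ge, Rmax_r. rewrite Rabs_right; lra.
  - eapply Rge_trans. apply Rle_ge, Rmax_l. rewrite Rabs_left; lra.
  - eapply Rge_trans. apply Rle_ge, Rmax_r. rewrite Rabs_left; lra.
Qed.

Lemma ord_right_iff c : ord_right c <-> inO oR c.
Proof. unfold ord_right, inO; simpl; lra. Qed.
Lemma ord_left_iff c : ord_left c <-> inO oL c.
Proof. unfold ord_left, inO; simpl; lra. Qed.
Lemma ord_up_iff c : ord_up c <-> inO oU c.
Proof. unfold ord_up, inO; simpl; lra. Qed.
Lemma ord_down_iff c : ord_down c <-> inO oD c.
Proof. unfold ord_down, inO; simpl; lra. Qed.

Definition cseg (P Q : config) (l : R) : config := (seg_pt (fst P) (fst Q) l, seg_pt (snd P) (snd Q) l).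
Lemma ell_cseg j P Q l : ell j (cseg P Q l) = (1 - l) * ell j P + l * ell j Q.
Proof. destruct j; unfold cseg, seg_pt; simpl; ring. Qed.


Definition piece (P Q : pt) (s tau : R) : R -> pt := fun t => seg_pt P Q ((t - s) / tau).
Definition glue (b : R) (f g : R -> pt) : R -> pt := fun t => if Rle_dec t b then f t else g t.
Definition gluec (b : R) (f g : R -> config) : R -> config := fun t => if Rle_dec t b then f t else g t.

Definition Lip (f : R -> pt) (a b : R) : Prop :=
  forall s t, a <= s <= b -> a <= t <= b -> dist1 (f s) (f t) <= Rabs (s - t).

Lemma lam_range s t tau : 0 <= tau -> s <= t <= s + tau -> 0 <= (t - s) / tau <= 1.
Proof.
  intros H0 Ht. destruct (Req_dec tau 0) as [E|E].
  - subst. replace (t - s) with 0 by lra. unfold Rdiv. rewrite Rmult_0_l. lra.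
  - split.
    + apply Rmult_le_pos; [lra|]. left; apply Rinv_0_lt_compat; lra.
    + apply (Rmult_le_reg_r tau); [lra|]. unfold Rdiv. rewrite Rmult_assoc, Rinv_l by lra. lra.
Qed.

Lemma piece_lip P Q s tau : 0 <= tau -> dist1 P Q <= tau ->
  forall t1 t2, dist1 (piece P Q s tau t1) (piece P Q s tau t2) <= Rabs (t1 - t2).
Proof.
  intros H0 Hd t1 t2. unfold piece. rewrite dist1_seg.
  destruct (Req_dec tau 0) as [E|E].
  - subst. pose proof (dist1_ge0 P Q). assert (dist1 P Q = 0) by lra. rewrite H1.
    rewrite Rmult_0_r. apply Rabs_pos.
  - replace ((t1 - s) / tau - (t2 - s) / tau) with ((t1 - t2) / tau) by (field; lra).
    unfold Rdiv. rewrite Rabs_mult, (Rabs_right (/ tau)) by (left; apply Rinv_0_lt_compat; lra).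
    rewrite Rmult_assoc. rewrite <- (Rmult_1_r (Rabs (t1 - t2))) at 2.
    apply Rmult_le_compat_l; [apply Rabs_pos|].
    apply (Rmult_le_reg_l tau); [lra|]. rewrite <- Rmult_assoc, Rinv_r by lra. lra.
Qed.

Lemma glue_lip b f g a c : a <= b <= c -> f b = g b -> Lip f a b -> Lip g b c -> Lip (glue b f g) a c.
Proof.
  intros Hb E Hf Hg s t Hs Ht. unfold glue.
  destruct (Rle_dec s b) as [h1|h1]; destruct (Rle_dec t b) as [h2|h2].
  - apply Hf; lra.
  - eapply Rle_trans. apply (dist1_tri _ (f b)).
    rewrite E. pose proof (Hf s b ltac:(lra) ltac:(lra)). pose proof (Hg b t ltac:(lra) ltac:(lra)).
    rewrite E in H. rewrite (Rabs_left (s - t)) by lra. rewrite Rabs_left1 in H by lra.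
    rewrite Rabs_left1 in H0 by lra. lra.
  - eapply Rle_trans. apply (dist1_tri _ (g b)).
    pose proof (Hg s b ltac:(lra) ltac:(lra)). pose proof (Hf b t ltac:(lra) ltac:(lra)).
    rewrite E in H0.
    rewrite (Rabs_right (s - t)) by lra. rewrite Rabs_right in H by lra.
    rewrite Rabs_right in H0 by lra. lra.
  - apply Hg; lra.
Qed.

Definition chain (m : R -> pt) (a b : R) (k : nat) (q : nat -> pt) : Prop :=
  q 0%nat = m a /\ q (S k) = m b /\
  forall p : pt,
      (exists t, a <= t <= b /\ m t = p) <->
      (exists (i : nat) (l : R), (i <= k)%nat /\ 0 <= l <= 1 /\ p = seg_pt (q i) (q (S i)) l).

Lemma piece_chain P Q s tau : 0 <= tau -> dist1 P Q <= tau ->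
  chain (piece P Q s tau) s (s + tau) 0 (fun i => match i with 0%nat => P | _ => Q end).
Proof.
  intros H0 Hd. unfold chain, piece.
  destruct (Req_dec tau 0) as [E|E].
  - subst. pose proof (dist1_ge0 P Q). apply dist1_zero in Hd. subst Q.
    split; [rewrite seg_pt_same; auto|]. split; [rewrite seg_pt_same; auto|].
    intro p. split.
    + intros [t [Ht Hp]]. exists 0%nat, 0. split; [lia|]. split; [lra|].
      rewrite <- Hp, !seg_pt_same. auto.
    + intros [i [l [Hi [Hl Hp]]]]. exists s. split; [lra|]. rewrite Hp, !seg_pt_same.
      destruct i; simpl; rewrite ?seg_pt_same; auto.
  - split. { replace ((s - s) / tau) with 0 by (field; lra). rewrite seg_pt_0. auto. }
    split. { replace ((s + tau - s) / tau) with 1 by (field; lra). rewrite seg_pt_1. auto. }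
    intro p. split.
    + intros [t [Ht Hp]]. exists 0%nat, ((t - s) / tau). split; [lia|]. split.
      * apply lam_range; lra.
      * auto.
    + intros [i [l [Hi [Hl Hp]]]]. assert (i = 0%nat) by lia. subst i.
      exists (s + l * tau). split.
      * split; [nra|nra].
      * rewrite Hp. f_equal. field. lra.
Qed.

Lemma glue_chain b f g a c k1 q1 k2 q2 :
  a <= b <= c -> f b = g b -> chain f a b k1 q1 -> chain g b c k2 q2 ->
  chain (glue b f g) a c (k1 + k2 + 1)
        (fun i => if Nat.leb i k1 then q1 i else q2 (i - S k1)%nat).
Proof.
  intros Hb E [F0 [F1 F2']] [G0 [G1 G2]]. unfold chain. split; [|split].
  - simpl. unfold glue. destruct (Rle_dec a b); [auto|lra].
  - destruct (Nat.leb_spec (S (k1 + k2 + 1)) k1); [lia|].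
    replace (S (k1 + k2 + 1) - S k1)%nat with (S k2) by lia. rewrite G1.
    unfold glue. destruct (Rle_dec c b); auto. assert (c = b) by lra. subst. auto.
  - intro p. split.
    + intros [t [Ht Hp]]. unfold glue in Hp. destruct (Rle_dec t b) as [h|h].
      * destruct (proj1 (F2' p) (ex_intro _ t (conj (conj (proj1 Ht) h) Hp))) as [i [l [Hi [Hl Hq]]]].
        exists i, l. split; [lia|]. split; auto.
        destruct (Nat.leb_spec i k1); [|lia].
        destruct (Nat.leb_spec (S i) k1); auto.
        assert (i = k1) by lia. subst i. replace (S k1 - S k1)%nat with 0%nat by lia.
        rewrite G0, <- E, <- F1. auto.
      * destruct (proj1 (G2 p) (ex_intro _ t (conj (conj (Rlt_le _ _ (Rnot_le_lt _ _ h)) (proj2 Ht)) Hp))) as [i [l [Hi [Hl Hq]]]].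
        exists (S k1 + i)%nat, l. split; [lia|]. split; auto.
        destruct (Nat.leb_spec (S k1 + i) k1); [lia|].
        destruct (Nat.leb_spec (S (S k1 + i)) k1); [lia|].
        replace (S k1 + i - S k1)%nat with i by lia. replace (S (S k1 + i) - S k1)%nat with (S i) by lia.
        auto.
    + intros [i [l [Hi [Hl Hq]]]].
      destruct (Nat.leb_spec i k1) as [h|h].
      * assert (Hq' : p = seg_pt (q1 i) (q1 (S i)) l).
        { rewrite Hq. destruct (Nat.leb_spec (S i) k1); auto.
          assert (i = k1) by lia. subst i. replace (S k1 - S k1)%nat with 0%nat by lia.
          rewrite G0, <- E, <- F1. auto. }
        destruct (proj2 (F2' p) (ex_intro _ i (ex_intro _ l (conj h (conj Hl Hq'))))) as [t [Ht Hp]].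
        exists t. split; [lra|]. unfold glue. destruct (Rle_dec t b); [auto|lra].
      * destruct (Nat.leb_spec (S i) k1); [lia|].
        assert (Hq' : p = seg_pt (q2 (i - S k1)%nat) (q2 (S (i - S k1))) l).
        { rewrite Hq. replace (S i - S k1)%nat with (S (i - S k1)) by lia. auto. }
        assert (Hik : (i - S k1 <= k2)%nat) by lia.
        destruct (proj2 (G2 p) (ex_intro _ (i - S k1)%nat (ex_intro _ l (conj Hik (conj Hl Hq'))))) as [t [Ht Hp]].
        exists t. split; [lra|]. unfold glue. destruct (Rle_dec t b); auto.
        assert (t = b) by lra. subst. rewrite E. auto.
Qed.

Lemma chain_poly m a b k q : chain m a b k q -> polygonal_image m a b.
Proof. intros [_ [_ H]]. exists k, q. exact H. Qed.

Lemma is_interval_ext (S1 S2 : R -> Prop) : (forall t, S1 t <-> S2 t) -> is_interval S1 -> is_interval S2.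
Proof. intros E H a b c Ha Hb Hc. apply E. apply (H a b c); try apply E; auto. Qed.

Definition meets (C : R -> config) (a b : R) (j : Ord) : Prop := exists t, a <= t <= b /\ inO j (C t).
Definition SI (C : R -> config) (a b : R) (j : Ord) : Prop :=
  is_interval (fun t => a <= t <= b /\ inO j (C t)).

Lemma gluec_SI b F G a c j : a <= b <= c -> F b = G b -> SI F a b j -> SI G b c j ->
  (meets F a b j -> meets G b c j -> inO j (F b)) -> SI (gluec b F G) a c j.
Proof.
  intros Hb E HF HG J x y z [Hx Ix] [Hy Iy] Hz. unfold gluec in *. split; [lra|].
  destruct (Rle_dec x b) as [h1|h1]; destruct (Rle_dec y b) as [h2|h2].
  - destruct (Rle_dec z b); [|lra]. apply (HF x y z); auto; split; auto; lra.
  - assert (Jb : inO j (F b)).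
    { apply J. exists x; split; [lra|auto]. exists y; split; [lra|auto]. }
    destruct (Rle_dec z b).
    + apply (HF x b z); auto; split; auto; lra.
    + apply (HG b y z); [split; [lra|rewrite <- E; auto]|split; [lra|auto]|lra].
  - lra.
  - destruct (Rle_dec z b); [lra|]. apply (HG x y z); auto; split; auto; lra.
Qed.

Lemma gluec_meets b F G a c j : a <= b <= c -> F b = G b -> meets (gluec b F G) a c j -> meets F a b j \/ meets G b c j.
Proof.
  intros Hb E [t [Ht It]]. unfold gluec in It. destruct (Rle_dec t b).
  - left. exists t. split; [lra|auto].
  - right. exists t. split; [lra|auto].
Qed.

Definition cpiece (P Q : config) (s tau : R) : R -> config := fun t => cseg P Q ((t - s) / tau).

Lemma cpiece_ell j P Q s tau t : ell j (cpiece P Q s tau t) = ell j P + (t - s) * ((ell j Q - ell j P) / tau).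
Proof. unfold cpiece. rewrite ell_cseg. unfold Rdiv. ring. Qed.

Lemma cpiece_SI P Q s tau j : SI (cpiece P Q s tau) s (s + tau) j.
Proof.
  intros x y z [Hx Ix] [Hy Iy] Hz. split; [lra|]. unfold inO in *. rewrite cpiece_ell in *.
  set (X := (ell j Q - ell j P) / tau) in *.
  destruct (Rle_dec 0 X).
  - assert ((x - s) * X <= (z - s) * X) by (apply Rmult_le_compat_r; lra). lra.
  - assert ((y - s) * X <= (z - s) * X) by nra. lra.
Qed.

Lemma cpiece_in P Q s tau j t : 0 <= tau -> s <= t <= s + tau -> inO j P -> inO j Q -> inO j (cpiece P Q s tau t).
Proof.
  intros H0 Ht HP HQ. unfold inO in *. unfold cpiece. rewrite ell_cseg.
  pose proof (lam_range s t tau H0 Ht). set (l := (t - s) / tau) in *. nra.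
Qed.

Lemma cpiece_meets P Q s tau j : 0 <= tau -> meets (cpiece P Q s tau) s (s + tau) j -> inO j P \/ inO j Q.
Proof.
  intros H0 [t [Ht It]]. unfold inO in *. unfold cpiece in It. rewrite ell_cseg in It.
  pose proof (lam_range s t tau H0 Ht). set (l := (t - s) / tau) in *.
  destruct (Rle_dec 1 (ell j P)); [auto|]. right.
  destruct (Rle_dec 1 (ell j Q)) as [h|h]; [auto|]. exfalso.
  set (d := Rmin (1 - ell j P) (1 - ell j Q)).
  assert (d1 : d <= 1 - ell j P) by apply Rmin_l. assert (d2 : d <= 1 - ell j Q) by apply Rmin_r.
  assert (d0 : 0 < d) by (unfold d; apply Rmin_glb_lt; lra).
  assert ((1 - l) * d <= (1 - l) * (1 - ell j P)) by (apply Rmult_le_compat_l; lra).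
  assert (l * d <= l * (1 - ell j Q)) by (apply Rmult_le_compat_l; lra).
  lra.
Qed.


Definition cm (P Q : config) : R := Rmax (dist1 (fst P) (fst Q)) (dist1 (snd P) (snd Q)).
Lemma cm_fst P Q : dist1 (fst P) (fst Q) <= cm P Q. Proof. apply Rmax_l. Qed.
Lemma cm_snd P Q : dist1 (snd P) (snd Q) <= cm P Q. Proof. apply Rmax_r. Qed.
Lemma cm_ge0 P Q : 0 <= cm P Q. Proof. pose proof (cm_fst P Q). pose proof (dist1_ge0 (fst P) (fst Q)). lra. Qed.
Lemma cm_refl P : cm P P = 0.
Proof. unfold cm. rewrite !dist1_refl. unfold Rmax. destruct (Rle_dec 0 0); auto. Qed.
Lemma cm_tri P Q R' : cm P R' <= cm P Q + cm Q R'.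
Proof.
  unfold cm at 1. apply Rmax_lub.
  - pose proof (dist1_tri (fst P) (fst Q) (fst R')). pose proof (cm_fst P Q). pose proof (cm_fst Q R'). lra.
  - pose proof (dist1_tri (snd P) (snd Q) (snd R')). pose proof (cm_snd P Q). pose proof (cm_snd Q R'). lra.
Qed.

Fixpoint tm (W : nat -> config) (i : nat) : R :=
  match i with 0%nat => 0 | S i' => tm W i' + cm (W i') (W i) end.

Lemma tm_mono W i : tm W i <= tm W (S i).
Proof. simpl. pose proof (cm_ge0 (W i) (W (S i))). lra. Qed.

Definition pc (pr : config -> pt) (W : nat -> config) (i : nat) : R -> pt :=
  piece (pr (W i)) (pr (W (S i))) (tm W i) (cm (W i) (W (S i))).

Definition sch (pr : config -> pt) (W : nat -> config) : R -> pt :=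
  glue (tm W 1) (pc pr W 0) (glue (tm W 2) (pc pr W 1) (glue (tm W 3) (pc pr W 2) (pc pr W 3))).

Definition cpc (W : nat -> config) (i : nat) : R -> config :=
  cpiece (W i) (W (S i)) (tm W i) (cm (W i) (W (S i))).

Definition csch (W : nat -> config) : R -> config :=
  gluec (tm W 1) (cpc W 0) (gluec (tm W 2) (cpc W 1) (gluec (tm W 3) (cpc W 2) (cpc W 3))).

Lemma glue_pair b f1 g1 f2 g2 t :
  (glue b f1 g1 t, glue b f2 g2 t) = gluec b (fun t => (f1 t, f2 t)) (fun t => (g1 t, g2 t)) t.
Proof. unfold glue, gluec. destruct (Rle_dec t b); auto. Qed.

Lemma sch_pair W t : (sch fst W t, sch snd W t) = csch W t.
Proof.
  unfold sch, csch, glue, gluec.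
  destruct (Rle_dec t (tm W 1)); [reflexivity|].
  destruct (Rle_dec t (tm W 2)); [reflexivity|].
  destruct (Rle_dec t (tm W 3)); reflexivity.
Qed.

Lemma pc_dist pr W i : (pr = fst \/ pr = snd) -> dist1 (pr (W i)) (pr (W (S i))) <= cm (W i) (W (S i)).
Proof. intros [-> | ->]; [apply cm_fst|apply cm_snd]. Qed.

Lemma pc_start pr W i : pc pr W i (tm W i) = pr (W i).
Proof. unfold pc, piece. replace (tm W i - tm W i) with 0 by ring. unfold Rdiv. rewrite Rmult_0_l. apply seg_pt_0. Qed.

Lemma pc_end pr W i : (pr = fst \/ pr = snd) -> pc pr W i (tm W (S i)) = pr (W (S i)).
Proof.
  intro Hp. pose proof (pc_chain_aux := piece_chain (pr (W i)) (pr (W (S i))) (tm W i) (cm (W i) (W (S i))) (cm_ge0 _ _) (pc_dist pr W i Hp)).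
  destruct pc_chain_aux as [_ [E _]]. unfold pc. simpl tm. rewrite <- E. reflexivity.
Qed.

Lemma glue_at b b' f g : b <= b' -> glue b' f g b = f b.
Proof. intro h. unfold glue. destruct (Rle_dec b b'); [auto|lra]. Qed.

Lemma sch_chain pr W : (pr = fst \/ pr = snd) ->
  exists q, chain (sch pr W) 0 (tm W 4) 3 q /\ q 0%nat = pr (W 0%nat) /\ q 4%nat = pr (W 4%nat).
Proof.
  intro Hp.
  assert (C : forall i, chain (pc pr W i) (tm W i) (tm W (S i)) 0 (fun k => match k with 0%nat => pr (W i) | _ => pr (W (S i)) end)).
  { intro i. apply piece_chain. apply cm_ge0. apply pc_dist; auto. }
  pose proof (tm_mono W 0). pose proof (tm_mono W 1). pose proof (tm_mono W 2). pose proof (tm_mono W 3).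
  assert (h3 : tm W 2 <= tm W 3 <= tm W 4) by lra.
  assert (h2 : tm W 1 <= tm W 2 <= tm W 4) by lra.
  assert (h1 : tm W 0 <= tm W 1 <= tm W 4) by lra.
  assert (g2 : tm W 2 <= tm W 3) by lra.
  assert (g1 : tm W 1 <= tm W 2) by lra.
  assert (C3 := glue_chain (tm W 3) (pc pr W 2) (pc pr W 3) (tm W 2) (tm W 4) _ _ _ _ h3
                 (eq_trans (pc_end pr W 2 Hp) (eq_sym (pc_start pr W 3))) (C 2%nat) (C 3%nat)).
  assert (C2 := glue_chain (tm W 2) (pc pr W 1) _ (tm W 1) (tm W 4) _ _ _ _ h2
                 (eq_trans (pc_end pr W 1 Hp) (eq_trans (eq_sym (pc_start pr W 2)) (eq_sym (glue_at _ _ (pc pr W 2) (pc pr W 3) g2)))) (C 1%nat) C3).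
  assert (C1 := glue_chain (tm W 1) (pc pr W 0) _ (tm W 0) (tm W 4) _ _ _ _ h1
                 (eq_trans (pc_end pr W 0 Hp) (eq_trans (eq_sym (pc_start pr W 1)) (eq_sym (glue_at _ _ (pc pr W 1) (glue (tm W 3) (pc pr W 2) (pc pr W 3)) g1)))) (C 0%nat) C2).
  eexists. split; [exact C1|]. split; reflexivity.
Qed.

Lemma sch_lip pr W : (pr = fst \/ pr = snd) -> Lip (sch pr W) 0 (tm W 4).
Proof.
  intro Hp.
  assert (L : forall i, Lip (pc pr W i) (tm W i) (tm W (S i))).
  { intros i s t _ _. apply piece_lip. apply cm_ge0. apply pc_dist; auto. }
  pose proof (tm_mono W 0). pose proof (tm_mono W 1). pose proof (tm_mono W 2). pose proof (tm_mono W 3).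
  unfold sch. change 0 with (tm W 0).
  apply glue_lip; [lra| |apply L|].
  { rewrite glue_at by lra. rewrite pc_end, pc_start; auto. }
  apply glue_lip; [lra| |apply L|].
  { rewrite glue_at by lra. rewrite pc_end, pc_start; auto. }
  apply glue_lip; [lra| |apply L|apply L].
  { rewrite pc_end, pc_start; auto. }
Qed.

Definition Cont (j : Ord) (W : nat -> config) : Prop :=
  forall p q r, (p < q)%nat -> (q < r)%nat -> (r <= 4)%nat -> inO j (W p) -> inO j (W r) -> inO j (W q).

Lemma cpc_start W i : cpc W i (tm W i) = W i.
Proof.
  unfold cpc, cpiece. replace (tm W i - tm W i) with 0 by ring. unfold Rdiv. rewrite Rmult_0_l.
  unfold cseg. rewrite !seg_pt_0. destruct (W i); auto.
Qed.
Lemma cpc_end W i : cpc W i (tm W (S i)) = W (S i).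
Proof.
  unfold cpc. pose proof (pc_end fst W i (or_introl eq_refl)). pose proof (pc_end snd W i (or_intror eq_refl)).
  unfold pc, piece in *. unfold cpiece, cseg. rewrite H, H0. destruct (W (S i)); auto.
Qed.
Lemma gluec_at b b' f g : b <= b' -> gluec b' f g b = f b.
Proof. intro h. unfold gluec. destruct (Rle_dec b b'); [auto|lra]. Qed.

Lemma csch_SI W j : Cont j W -> SI (csch W) 0 (tm W 4) j.
Proof.
  intro HC.
  pose proof (tm_mono W 0). pose proof (tm_mono W 1). pose proof (tm_mono W 2). pose proof (tm_mono W 3).
  assert (S' : forall i, SI (cpc W i) (tm W i) (tm W (S i)) j).
  { intro i. apply cpiece_SI. }
  assert (M : forall i, meets (cpc W i) (tm W i) (tm W (S i)) j -> inO j (W i) \/ inO j (W (S i))).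
  { intros i Hm. apply (cpiece_meets _ _ (tm W i) (cm (W i) (W (S i)))); [apply cm_ge0|exact Hm]. }
  assert (E3 : cpc W 2 (tm W 3) = cpc W 3 (tm W 3)) by (rewrite cpc_end, cpc_start; auto).
  assert (E2 : cpc W 1 (tm W 2) = gluec (tm W 3) (cpc W 2) (cpc W 3) (tm W 2))
    by (rewrite gluec_at by lra; rewrite cpc_end, cpc_start; auto).
  assert (E1 : cpc W 0 (tm W 1) = gluec (tm W 2) (cpc W 1) (gluec (tm W 3) (cpc W 2) (cpc W 3)) (tm W 1))
    by (rewrite gluec_at by lra; rewrite cpc_end, cpc_start; auto).
  unfold csch. change 0 with (tm W 0).
  apply gluec_SI; [lra|exact E1|apply S'| |].
  - apply gluec_SI; [lra|exact E2|apply S'| |].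
    + apply gluec_SI; [lra|exact E3|apply S'|apply S'|].
      intros m1 m2. rewrite cpc_end. apply M in m1. apply M in m2.
      destruct m1 as [a|a]; [|exact a]. destruct m2 as [b|b]; [exact b|].
      apply (HC 2 3 4)%nat; auto; lia.
    + intros m1 m2. rewrite cpc_end. apply M in m1.
      apply gluec_meets in m2; [|lra|exact E3]. destruct m2 as [m2|m2]; apply M in m2.
      * destruct m1 as [a|a]; [|exact a]. destruct m2 as [b|b]; [exact b|].
        apply (HC 1 2 3)%nat; auto; lia.
      * destruct m1 as [a|a]; [|exact a]. destruct m2 as [b|b].
        -- apply (HC 1 2 3)%nat; auto; lia.
        -- apply (HC 1 2 4)%nat; auto; lia.
  - intros m1 m2. rewrite cpc_end. apply M in m1. destruct m1 as [a|a]; [|exact a].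
    apply gluec_meets in m2; [|lra|exact E2]. destruct m2 as [m2|m2].
    + apply M in m2. destruct m2 as [b|b]; [exact b|]. apply (HC 0 1 2)%nat; auto; lia.
    + apply gluec_meets in m2; [|lra|exact E3]. destruct m2 as [m2|m2]; apply M in m2.
      * destruct m2 as [b|b]; [apply (HC 0 1 2)%nat|apply (HC 0 1 3)%nat]; auto; lia.
      * destruct m2 as [b|b]; [apply (HC 0 1 3)%nat|apply (HC 0 1 4)%nat]; auto; lia.
Qed.

Lemma csch_F2 W : (forall i, (i < 4)%nat -> exists j, inO j (W i) /\ inO j (W (S i))) ->
  forall t, 0 <= t <= tm W 4 -> F2 (csch W t).
Proof.
  intros H t Ht.
  pose proof (tm_mono W 0). pose proof (tm_mono W 1). pose proof (tm_mono W 2). pose proof (tm_mono W 3).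
  assert (P : forall i, (i < 4)%nat -> tm W i <= t <= tm W (S i) -> F2 (cpc W i t)).
  { intros i Hi Ht'. destruct (H i Hi) as [j [a b]]. apply (inO_F2 j).
    apply cpiece_in; auto. apply cm_ge0. }
  unfold csch, gluec. simpl tm in *.
  destruct (Rle_dec t _). { apply P; simpl; lra || lia. }
  destruct (Rle_dec t _). { apply P; simpl; lra || lia. }
  destruct (Rle_dec t _). { apply P; simpl; lra || lia. }
  apply P; simpl; lra || lia.
Qed.

Lemma sched_ok W :
  (forall i, (i < 4)%nat -> exists j, inO j (W i) /\ inO j (W (S i))) ->
  feasible_schedule (sch fst W) (sch snd W) 0 (tm W 4) (W 0%nat) (W 4%nat).
Proof.
  intros H.
  pose proof (tm_mono W 0). pose proof (tm_mono W 1). pose proof (tm_mono W 2). pose proof (tm_mono W 3).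
  destruct (sch_chain fst W (or_introl eq_refl)) as [q1 [[A1 [B1 C1]] [Q10 Q14]]].
  destruct (sch_chain snd W (or_intror eq_refl)) as [q2 [[A2 [B2 C2]] [Q20 Q24]]].
  split; [simpl in *; lra|]. split.
  { split; [apply sch_lip; auto|]. exists 3%nat, q1. exact C1. }
  split.
  { split; [apply sch_lip; auto|]. exists 3%nat, q2. exact C2. }
  split.
  { intros t Ht. rewrite sch_pair. apply csch_F2; auto. }
  split.
  - rewrite <- A1, <- A2, Q10, Q20. destruct (W 0%nat); auto.
  - rewrite <- B1, <- B2. change (S 3) with 4%nat. rewrite Q14, Q24. destruct (W 4%nat); auto.
Qed.


Definition cdist (P Q : config) : R := dist1 (fst P) (fst Q) + dist1 (snd P) (snd Q).
Lemma cdist_zero P Q : cdist P Q <= 0 -> P = Q.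
Proof.
  unfold cdist. intro H. pose proof (dist1_ge0 (fst P) (fst Q)). pose proof (dist1_ge0 (snd P) (snd Q)).
  assert (E1 : fst P = fst Q) by (apply dist1_zero; lra).
  assert (E2 : snd P = snd Q) by (apply dist1_zero; lra).
  destruct P, Q; simpl in *; subst; auto.
Qed.

Fixpoint jr (e : bool) (j0 : Ord) (i : nat) : Ord :=
  match i with 0%nat => j0 | S i' => step e (jr e j0 i') end.

Definition V (A B : config) (j0 : Ord) (e : bool) (k : nat) (W1 W2 W3 : config) : Prop :=
  inO j0 A /\
  match k with
  | 0%nat => cdist W1 B <= 0 /\ cdist W2 B <= 0 /\ cdist W3 B <= 0 /\ inO j0 B
  | 1%nat => inO j0 W1 /\ inO (jr e j0 1) W1 /\ cdist W2 B <= 0 /\ cdist W3 B <= 0 /\ inO (jr e j0 1) B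
  | 2%nat => inO j0 W1 /\ inO (jr e j0 1) W1 /\ inO (jr e j0 1) W2 /\ inO (jr e j0 2) W2 /\
             cdist W3 B <= 0 /\ inO (jr e j0 2) B
  | _ => inO j0 W1 /\ inO (jr e j0 1) W1 /\ inO (jr e j0 1) W2 /\ inO (jr e j0 2) W2 /\
         inO (jr e j0 2) W3 /\ inO (jr e j0 3) W3 /\ inO (jr e j0 3) B
  end.

Definition NS (A B : config) : Prop := forall j, inO j A -> inO j B -> False.

Definition Wv (A W1 W2 W3 B : config) (i : nat) : config :=
  match i with 0%nat => A | 1%nat => W1 | 2%nat => W2 | 3%nat => W3 | _ => B end.

Definition Cont10 (j : Ord) (W : nat -> config) : Prop :=
  let I i := inO j (W i) in
  (I 0%nat -> I 2%nat -> I 1%nat) /\ (I 0%nat -> I 3%nat -> I 1%nat) /\ (I 0%nat -> I 4%nat -> I 1%nat) /\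
  (I 0%nat -> I 3%nat -> I 2%nat) /\ (I 0%nat -> I 4%nat -> I 2%nat) /\ (I 0%nat -> I 4%nat -> I 3%nat) /\
  (I 1%nat -> I 3%nat -> I 2%nat) /\ (I 1%nat -> I 4%nat -> I 2%nat) /\ (I 1%nat -> I 4%nat -> I 3%nat) /\
  (I 2%nat -> I 4%nat -> I 3%nat).

Lemma Cont10_Cont j W : Cont10 j W -> Cont j W.
Proof.
  intros [c1 [c2 [c3 [c4 [c5 [c6 [c7 [c8 [c9 c10]]]]]]]]] p q r Hpq Hqr Hr.
  destruct p as [|[|[|[|p]]]]; destruct q as [|[|[|[|q]]]]; destruct r as [|[|[|[|[|r]]]]]; try lia; auto.
Qed.

Lemma route_ok A B j0 e k W1 W2 W3 :
  (k <= 3)%nat -> V A B j0 e k W1 W2 W3 -> (k <> 0%nat -> NS A B) ->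
  (forall i, (i < 4)%nat -> exists j, inO j (Wv A W1 W2 W3 B i) /\ inO j (Wv A W1 W2 W3 B (S i))) /\
  (forall j, Cont j (Wv A W1 W2 W3 B)).
Proof.
  intros Hk [HA HV] HNS. split.
  - intros i Hi. exists (jr e j0 (Nat.min i k)).
    destruct k as [|[|[|[|k]]]]; try lia.
    + destruct HV as [a [b [c d]]]. apply cdist_zero in a, b, c. subst.
      destruct i as [|[|[|[|i]]]]; try lia; simpl; auto.
    + destruct HV as [a [b [c [d f]]]]. apply cdist_zero in c, d. subst.
      destruct i as [|[|[|[|i]]]]; try lia; simpl; auto.
    + destruct HV as [a [b [c [d [f g]]]]]. apply cdist_zero in f. subst.
      destruct i as [|[|[|[|i]]]]; try lia; simpl; auto.
    + destruct HV as [a [b [c [d [f [g h]]]]]].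
      destruct i as [|[|[|[|i]]]]; try lia; simpl; auto.
  - intro j. apply Cont10_Cont. unfold Cont10.
    destruct k as [|[|[|[|k]]]]; try lia.
    + destruct HV as [a [b [c d]]]. apply cdist_zero in a, b, c. subst.
      simpl. repeat split; intros; auto.
    + assert (N : ell j A < 1 \/ ell j B < 1).
      { destruct (Rlt_le_dec (ell j A) 1); auto. destruct (Rlt_le_dec (ell j B) 1); auto.
        exfalso. apply (HNS ltac:(lia) j); auto. }
      destruct HV as [a [b [c [d f]]]]. apply cdist_zero in c, d. subst.
      destruct j0, e, j; simpl in *; unfold inO in *; simpl in *;
      repeat split; intros; destruct N; lra.
    + assert (N : ell j A < 1 \/ ell j B < 1).
      { destruct (Rlt_le_dec (ell j A) 1); auto. destruct (Rlt_le_dec (ell j B) 1); auto.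
        exfalso. apply (HNS ltac:(lia) j); auto. }
      destruct HV as [a [b [c [d [f g]]]]]. apply cdist_zero in f. subst.
      destruct j0, e, j; simpl in *; unfold inO in *; simpl in *;
      repeat split; intros; destruct N; lra.
    + assert (N : ell j A < 1 \/ ell j B < 1).
      { destruct (Rlt_le_dec (ell j A) 1); auto. destruct (Rlt_le_dec (ell j B) 1); auto.
        exfalso. apply (HNS ltac:(lia) j); auto. }
      destruct HV as [a [b [c [d [f [g h]]]]]].
      destruct j0, e, j; simpl in *; unfold inO in *; simpl in *;
      repeat split; intros; destruct N; lra.
Qed.


Lemma ord_cases j j' : j' = j \/ j' = next j \/ j' = next (next j) \/ j' = prev j.
Proof. destruct j, j'; simpl; auto 10. Qed.

Lemma Rabs_sub_le a b : Rabs (a - b) <= Rabs a + Rabs b.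
Proof. unfold Rminus. pose proof (Rabs_triang a (- b)). rewrite Rabs_Ropp in H. exact H. Qed.

Lemma ell_lip n1 n2 s0 s1 j s t : Lip n1 s0 s1 -> Lip n2 s0 s1 -> s0 <= s <= s1 -> s0 <= t <= s1 ->
  Rabs (ell j (n1 s, n2 s) - ell j (n1 t, n2 t)) <= 2 * Rabs (s - t).
Proof.
  intros L1 L2 Hs Ht. pose proof (L1 s t Hs Ht). pose proof (L2 s t Hs Ht).
  pose proof (dist1_x (n1 s) (n1 t)). pose proof (dist1_y (n1 s) (n1 t)).
  pose proof (dist1_x (n2 s) (n2 t)). pose proof (dist1_y (n2 s) (n2 t)).
  destruct j; simpl.
  - replace (fst (n1 s) - fst (n2 s) - (fst (n1 t) - fst (n2 t))) with ((fst (n1 s) - fst (n1 t)) - (fst (n2 s) - fst (n2 t))) by ring.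
    pose proof (Rabs_sub_le (fst (n1 s) - fst (n1 t)) (fst (n2 s) - fst (n2 t))). lra.
  - replace (snd (n1 s) - snd (n2 s) - (snd (n1 t) - snd (n2 t))) with ((snd (n1 s) - snd (n1 t)) - (snd (n2 s) - snd (n2 t))) by ring.
    pose proof (Rabs_sub_le (snd (n1 s) - snd (n1 t)) (snd (n2 s) - snd (n2 t))). lra.
  - replace (fst (n2 s) - fst (n1 s) - (fst (n2 t) - fst (n1 t))) with ((fst (n2 s) - fst (n2 t)) - (fst (n1 s) - fst (n1 t))) by ring.
    pose proof (Rabs_sub_le (fst (n2 s) - fst (n2 t)) (fst (n1 s) - fst (n1 t))). lra.
  - replace (snd (n2 s) - snd (n1 s) - (snd (n2 t) - snd (n1 t))) with ((snd (n2 s) - snd (n2 t)) - (snd (n1 s) - snd (n1 t))) by ring.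
    pose proof (Rabs_sub_le (snd (n2 s) - snd (n2 t)) (snd (n1 s) - snd (n1 t))). lra.
Qed.

Lemma ell_near n1 n2 s0 s1 j s t : Lip n1 s0 s1 -> Lip n2 s0 s1 -> s0 <= s <= s1 -> s0 <= t <= s1 ->
  ell j (n1 s, n2 s) - 2 * Rabs (s - t) <= ell j (n1 t, n2 t) <= ell j (n1 s, n2 s) + 2 * Rabs (s - t).
Proof.
  intros. pose proof (ell_lip n1 n2 s0 s1 j s t H H0 H1 H2).
  destruct (Rcase_abs (ell j (n1 s, n2 s) - ell j (n1 t, n2 t))) as [h|h].
  - rewrite Rabs_left in H3 by lra. pose proof (Rabs_pos (s - t)). lra.
  - rewrite Rabs_right in H3 by lra. pose proof (Rabs_pos (s - t)). lra.
Qed.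

Lemma step_lemma n1 n2 s0 s1 ts j :
  Lip n1 s0 s1 -> Lip n2 s0 s1 -> (forall t, s0 <= t <= s1 -> F2 (n1 t, n2 t)) ->
  s0 <= ts <= s1 -> inO j (n1 ts, n2 ts) -> ~ inO j (n1 s1, n2 s1) ->
  exists r e, ts <= r < s1 /\ inO j (n1 r, n2 r) /\
    (forall t, r < t <= s1 -> ~ inO j (n1 t, n2 t)) /\ inO (step e j) (n1 r, n2 r) /\
    (forall eps, 0 < eps -> exists t, r < t <= s1 /\ t < r + eps /\ inO (step e j) (n1 t, n2 t)).
Proof.
  intros L1 L2 HF Hts Ij Nj.
  set (M := fun t => (n1 t, n2 t)).
  set (E := fun x => ts <= x <= s1 /\ inO j (M x)).
  assert (Hb : bound E) by (exists s1; intros x [Hx _]; lra).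
  assert (He : exists x, E x) by (exists ts; split; [lra|exact Ij]).
  destruct (completeness E Hb He) as [r [Hub Hlub]].
  assert (r1 : ts <= r) by (apply Hub; split; [lra|exact Ij]).
  assert (r2 : r <= s1) by (apply Hlub; intros x [Hx _]; lra).
  assert (near := fun j' s t Hs Ht => ell_near n1 n2 s0 s1 j' s t L1 L2 Hs Ht).
  assert (Ir : inO j (M r)).
  { destruct (Rle_dec 1 (ell j (M r))) as [h|h]; [exact h|exfalso].
    set (eta := (1 - ell j (M r)) / 4).
    assert (eta0 : 0 < eta) by (unfold eta; lra).
    assert (~ is_upper_bound E (r - eta)) by (intro U; specialize (Hlub _ U); lra).
    apply not_all_ex_not in H. destruct H as [x Hx].
    apply imply_to_and in Hx. destruct Hx as [[Hx1 Hx2] Hx3].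
    assert (x <= r) by (apply Hub; split; auto).
    destruct (near j r x ltac:(lra) ltac:(lra)) as [_ U].
    rewrite Rabs_right in U by lra. unfold inO, eta, M in *. lra. }
  assert (rs : r < s1).
  { destruct (Req_dec r s1); [|lra]. subst r. contradiction. }
  assert (NR : forall t, r < t <= s1 -> ~ inO j (M t)).
  { intros t Ht It. assert (t <= r) by (apply Hub; split; [lra|exact It]). lra. }
  assert (gap : forall t, s0 <= t <= s1 -> (forall j', ell j' (M t) < 1) -> False).
  { intros t Ht H. destruct (F2_inO _ (HF t Ht)) as [j' Hj']. specialize (H j'). unfold inO, M in *. lra. }
  assert (four : forall t, ell j (M t) < 1 -> ell (next j) (M t) < 1 -> ell (next (next j)) (M t) < 1 ->
                 ell (prev j) (M t) < 1 -> forall j', ell j' (M t) < 1).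
  { intros t a b c d j'. destruct (ord_cases j j') as [->|[->|[->| ->]]]; auto. }
  set (h := ell (next j) (M r)).
  assert (Ijr : 1 <= ell j (M r)) by exact Ir.
  destruct (Rle_dec 1 h) as [h1|h1]; [|destruct (Rle_dec h (-1)) as [h2|h2]].
  - exists r, true. split; [lra|]. split; [exact Ir|]. split; [exact NR|]. split; [exact h1|].
    intros eps Heps. apply NNPP. intro C.
    set (d := Rmin (Rmin (eps / 2) (s1 - r)) (1 / 4)).
    assert (d0 : 0 < d) by (unfold d; repeat apply Rmin_glb_lt; lra).
    assert (d1 : d <= eps / 2) by (unfold d; eapply Rle_trans; [apply Rmin_l|apply Rmin_l]).
    assert (d2 : d <= s1 - r) by (unfold d; eapply Rle_trans; [apply Rmin_l|apply Rmin_r]).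
    assert (d3 : d <= 1 / 4) by (unfold d; apply Rmin_r).
    apply (gap (r + d)); [lra|]. apply four.
    + assert (~ inO j (M (r + d))) by (apply NR; lra). unfold inO in H. lra.
    + destruct (Rlt_le_dec (ell (next j) (M (r + d))) 1) as [x|x]; auto.
      exfalso. apply C. exists (r + d). split; [lra|]. split; [lra|]. exact x.
    + rewrite ell_opp. destruct (near j r (r + d) ltac:(lra) ltac:(lra)) as [U _].
      rewrite Rabs_left in U by lra. unfold M in *. lra.
    + rewrite ell_prev. destruct (near (next j) r (r + d) ltac:(lra) ltac:(lra)) as [U _].
      rewrite Rabs_left in U by lra. unfold h, M in *. lra.
  - exists r, false. simpl. split; [lra|]. split; [exact Ir|]. split; [exact NR|].
    split; [unfold inO; rewrite ell_prev; unfold h, M in *; lra|].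
    intros eps Heps. apply NNPP. intro C.
    set (d := Rmin (Rmin (eps / 2) (s1 - r)) (1 / 4)).
    assert (d0 : 0 < d) by (unfold d; repeat apply Rmin_glb_lt; lra).
    assert (d1 : d <= eps / 2) by (unfold d; eapply Rle_trans; [apply Rmin_l|apply Rmin_l]).
    assert (d2 : d <= s1 - r) by (unfold d; eapply Rle_trans; [apply Rmin_l|apply Rmin_r]).
    assert (d3 : d <= 1 / 4) by (unfold d; apply Rmin_r).
    apply (gap (r + d)); [lra|]. apply four.
    + assert (~ inO j (M (r + d))) by (apply NR; lra). unfold inO in H. lra.
    + destruct (near (next j) r (r + d) ltac:(lra) ltac:(lra)) as [_ U].
      rewrite Rabs_left in U by lra. unfold h, M in *. lra.
    + rewrite ell_opp. destruct (near j r (r + d) ltac:(lra) ltac:(lra)) as [U _].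
      rewrite Rabs_left in U by lra. unfold M in *. lra.
    + destruct (Rlt_le_dec (ell (prev j) (M (r + d))) 1) as [x|x]; auto.
      exfalso. apply C. exists (r + d). split; [lra|]. split; [lra|]. exact x.
  - exfalso.
    set (d := Rmin (Rmin ((1 - h) / 4) ((1 + h) / 4)) (Rmin (s1 - r) (1 / 4))).
    assert (d0 : 0 < d) by (unfold d; repeat apply Rmin_glb_lt; lra).
    assert (d1 : d <= (1 - h) / 4) by (unfold d; eapply Rle_trans; [apply Rmin_l|apply Rmin_l]).
    assert (d1' : d <= (1 + h) / 4) by (unfold d; eapply Rle_trans; [apply Rmin_l|apply Rmin_r]).
    assert (d2 : d <= s1 - r) by (unfold d; eapply Rle_trans; [apply Rmin_r|apply Rmin_l]).
    assert (d3 : d <= 1 / 4) by (unfold d; eapply Rle_trans; [apply Rmin_r|apply Rmin_r]).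
    apply (gap (r + d)); [lra|]. apply four.
    + assert (~ inO j (M (r + d))) by (apply NR; lra). unfold inO in H. lra.
    + destruct (near (next j) r (r + d) ltac:(lra) ltac:(lra)) as [_ U].
      rewrite Rabs_left in U by lra. unfold h, M in *. lra.
    + rewrite ell_opp. destruct (near j r (r + d) ltac:(lra) ltac:(lra)) as [U _].
      rewrite Rabs_left in U by lra. unfold M in *. lra.
    + rewrite ell_prev. destruct (near (next j) r (r + d) ltac:(lra) ltac:(lra)) as [U _].
      rewrite Rabs_left in U by lra. unfold h, M in *. lra.
Qed.


Definition cost (A W1 W2 W3 B : config) : R := cm A W1 + cm W1 W2 + cm W2 W3 + cm W3 B.

Lemma cm_time n1 n2 s0 s1 a b : Lip n1 s0 s1 -> Lip n2 s0 s1 -> s0 <= a -> a <= b -> b <= s1 ->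
  cm (n1 a, n2 a) (n1 b, n2 b) <= b - a.
Proof.
  intros L1 L2 h1 h2 h3. unfold cm. simpl. replace (b - a) with (Rabs (a - b)) by (rewrite Rabs_left1; lra).
  apply Rmax_lub; [apply L1|apply L2]; lra.
Qed.

Lemma jr4 e j : step e (step e (step e (step e j))) = j.
Proof. destruct e, j; reflexivity. Qed.

Lemma bool_cases e1 e2 : e2 = e1 \/ e2 = negb e1.
Proof. destruct e1, e2; auto. Qed.

Lemma extract n1 n2 s0 s1 A B : feasible_schedule n1 n2 s0 s1 A B -> NS A B ->
  exists j0 e k W1 W2 W3, (k <= 3)%nat /\ V A B j0 e k W1 W2 W3 /\ cost A W1 W2 W3 B <= s1 - s0.
Proof.
  intros [Hs [[L1 _] [[L2 _] [HF [EA EB]]]]] HNS.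
  assert (FA : F2 A) by (rewrite <- EA; apply HF; lra).
  destruct (F2_inO _ FA) as [j0 I0].
  assert (NB0 : ~ inO j0 (n1 s1, n2 s1)) by (rewrite EB; intro; apply (HNS j0); auto).
  assert (I0' : inO j0 (n1 s0, n2 s0)) by (rewrite EA; auto).
  assert (cmt := fun a b => cm_time n1 n2 s0 s1 a b L1 L2).
  destruct (step_lemma n1 n2 s0 s1 s0 j0 L1 L2 HF ltac:(lra) I0' NB0) as [r1 [e [R1 [I1 [N1 [J1 E1]]]]]].
  set (W1 := (n1 r1, n2 r1)).
  destruct (classic (inO (step e j0) B)) as [B1|B1].
  { exists j0, e, 1%nat, W1, B, B. split; [lia|]. split.
    - split; [auto|]. simpl. unfold cdist. rewrite !dist1_refl. repeat split; auto; lra.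
    - unfold cost. rewrite !cm_refl. pose proof (cmt s0 r1). pose proof (cmt r1 s1).
      rewrite <- EA, <- EB. unfold W1. lra. }
  assert (NB1 : ~ inO (step e j0) (n1 s1, n2 s1)) by (rewrite EB; auto).
  destruct (step_lemma n1 n2 s0 s1 r1 (step e j0) L1 L2 HF ltac:(lra) J1 NB1) as [r2 [e2 [R2 [I2 [N2 [J2 E2]]]]]].
  destruct (bool_cases e e2) as [-> | ->].
  2:{ exfalso. rewrite step_back in E2. destruct (E2 1 ltac:(lra)) as [t [Ht [_ It]]]. apply (N1 t); auto; lra. }
  set (W2 := (n1 r2, n2 r2)).
  destruct (classic (inO (step e (step e j0)) B)) as [B2|B2].
  { exists j0, e, 2%nat, W1, W2, B. split; [lia|]. split.
    - split; [auto|]. simpl. unfold cdist. rewrite !dist1_refl. repeat split; auto; lra.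
    - unfold cost. rewrite !cm_refl. pose proof (cmt s0 r1). pose proof (cmt r1 r2). pose proof (cmt r2 s1).
      rewrite <- EA, <- EB. unfold W1, W2. lra. }
  assert (NB2 : ~ inO (step e (step e j0)) (n1 s1, n2 s1)) by (rewrite EB; auto).
  destruct (step_lemma n1 n2 s0 s1 r2 _ L1 L2 HF ltac:(lra) J2 NB2) as [r3 [e3 [R3 [I3 [N3 [J3 E3]]]]]].
  destruct (bool_cases e e3) as [-> | ->].
  2:{ exfalso. rewrite step_back in E3. destruct (E3 1 ltac:(lra)) as [t [Ht [_ It]]]. apply (N2 t); auto; lra. }
  set (W3 := (n1 r3, n2 r3)).
  destruct (classic (inO (step e (step e (step e j0))) B)) as [B3|B3].
  { exists j0, e, 3%nat, W1, W2, W3. split; [lia|]. split.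
    - split; [auto|]. simpl. repeat split; auto.
    - unfold cost. pose proof (cmt s0 r1). pose proof (cmt r1 r2). pose proof (cmt r2 r3). pose proof (cmt r3 s1).
      rewrite <- EA, <- EB. unfold W1, W2, W3. lra. }
  exfalso.
  assert (NB3 : ~ inO (step e (step e (step e j0))) (n1 s1, n2 s1)) by (rewrite EB; auto).
  destruct (step_lemma n1 n2 s0 s1 r3 _ L1 L2 HF ltac:(lra) J3 NB3) as [r4 [e4 [R4 [I4 [N4 [J4 E4]]]]]].
  destruct (bool_cases e e4) as [-> | ->].
  - rewrite jr4 in E4. destruct (E4 1 ltac:(lra)) as [t [Ht [_ It]]]. apply (N1 t); auto; lra.
  - rewrite step_back in E4. destruct (E4 1 ltac:(lra)) as [t [Ht [_ It]]]. apply (N3 t); auto; lra.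
Qed.

From Stdlib Require Import List.


Notation Tn := Compactness.Tn.

Lemma Rabs_le_between x a : Rabs x <= a -> - a <= x <= a.
Proof. intro H. destruct (Rcase_abs x); [rewrite Rabs_left in H|rewrite Rabs_right in H]; lra. Qed.
Lemma between_Rabs_le x a : - a <= x <= a -> Rabs x <= a.
Proof. intro H. destruct (Rcase_abs x); [rewrite Rabs_left|rewrite Rabs_right]; lra. Qed.

Lemma evt n (a b : Tn n R) (S : Tn n R -> Prop) (f : Tn n R -> R) :
  (forall x, S x -> Compactness.bounded_n n a b x) ->
  (forall t, ~ S t -> exists d, 0 < d /\ forall x, Compactness.close_n n d x t -> ~ S x) ->
  (forall t eps, 0 < eps -> exists d, 0 < d /\ forall x, Compactness.close_n n d x t -> f t - eps < f x) ->
  (forall x, S x -> 0 <= f x) -> (exists x, S x) ->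
  exists x, S x /\ forall y, S y -> f x <= f y.
Proof.
  intros Hbd Hcl Hlsc Hpos [x0 Sx0].
  set (E := fun v => exists x, S x /\ v = - f x).
  assert (Eb : bound E). { exists 0. intros v [x [Sx ->]]. specialize (Hpos x Sx). lra. }
  assert (Ene : exists v, E v) by (exists (- f x0); exists x0; auto).
  destruct (completeness E Eb Ene) as [L [Hub Hlub]].
  set (m := - L).
  assert (Hm : forall x, S x -> m <= f x).
  { intros x Sx. assert (- f x <= L) by (apply Hub; exists x; auto). unfold m; lra. }
  assert (Happ : forall eps, 0 < eps -> exists x, S x /\ f x < m + eps).
  { intros eps Heps. apply NNPP. intro C.
    assert (is_upper_bound E (L - eps)).
    { intros v [x [Sx ->]]. destruct (Rle_dec (- f x) (L - eps)); auto. exfalso. apply C.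
      exists x. split; auto. unfold m. lra. }
    specialize (Hlub _ H). lra. }
  apply NNPP. intro NM.
  assert (G : forall x, S x -> m < f x).
  { intros x Sx. destruct (Rle_lt_dec (f x) m); auto. exfalso. apply NM. exists x. split; auto.
    intros y Sy. specialize (Hm y Sy). lra. }
  assert (Hd : forall t, exists d, 0 < d /\ (S t -> forall x, Compactness.close_n n d x t -> m + (f t - m) / 2 < f x) /\
                                   (~ S t -> forall x, Compactness.close_n n d x t -> ~ S x)).
  { intro t. destruct (classic (S t)) as [St|St].
    - destruct (Hlsc t ((f t - m) / 2)) as [d [d0 Hd]]. { specialize (G t St). lra. }
      exists d. split; auto. split; [|intro; contradiction].
      intros _ x Hx. specialize (Hd x Hx). lra.
    - destruct (Hcl t St) as [d [d0 Hd]]. exists d. split; auto. split; [intro; contradiction|auto]. }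
  pose (dl := fun t => constructive_indefinite_description _ (Hd t)).
  pose (delta := fun t => mkposreal (proj1_sig (dl t)) (proj1 (proj2_sig (dl t)))).
  apply (Compactness.compactness_list n a b delta). intros [l Hl].
  assert (Heps : exists eps, 0 < eps /\ forall t, In t l -> S t -> eps <= (f t - m) / 2).
  { clear Hl. induction l as [|t l IH].
    - exists 1. split; [lra|]. intros t [].
    - destruct IH as [e [e0 He]].
      destruct (classic (S t)) as [St|St].
      + exists (Rmin e ((f t - m) / 2)). split.
        { apply Rmin_glb_lt; auto. specialize (G t St). lra. }
        intros u [<-|Hu] Su; [apply Rmin_r|]. eapply Rle_trans; [apply Rmin_l|]. auto.
      + exists e. split; auto. intros u [<-|Hu] Su; [contradiction|auto]. }
  destruct Heps as [eps [eps0 Heps]].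
  destruct (Happ eps eps0) as [x [Sx Fx]].
  destruct (Hl x (Hbd x Sx)) as [t [It [_ Ct]]].
  simpl in Ct. destruct (proj2_sig (dl t)) as [_ [H1 H2]].
  destruct (classic (S t)) as [St|St].
  - specialize (H1 St x Ct). specialize (Heps t It St). lra.
  - exact (H2 St x Ct Sx).
Qed.

Fixpoint coord (n : nat) : Tn n R -> nat -> R :=
  match n with 0%nat => fun _ _ => 0 | S n' => fun x i => match i with 0%nat => fst x | S i' => coord n' (snd x) i' end end.
Fixpoint tn_of (n : nat) (g : nat -> R) : Tn n R :=
  match n with 0%nat => tt | S n' => (g 0%nat, tn_of n' (fun i => g (S i))) end.

Lemma coord_tn_of n g i : (i < n)%nat -> coord n (tn_of n g) i = g i.
Proof.
  revert g i. induction n; intros g i Hi; [lia|]. destruct i; simpl; auto.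
  rewrite IHn; auto; lia.
Qed.

Lemma close_coord n d x t : Compactness.close_n n d x t -> forall i, (i < n)%nat -> Rabs (coord n x i - coord n t i) < d.
Proof.
  revert x t. induction n; intros x t C i Hi; [lia|].
  destruct x as [x1 x2], t as [t1 t2]. simpl in C. destruct C as [C1 C2].
  destruct i; simpl; auto. apply IHn; auto; lia.
Qed.

Lemma bounded_of n a b x : (forall i, (i < n)%nat -> coord n a i <= coord n x i <= coord n b i) -> Compactness.bounded_n n a b x.
Proof.
  revert a b x. induction n; intros a b x H; simpl; auto.
  destruct a as [a1 a2], b as [b1 b2], x as [x1 x2]. split.
  - apply (H 0%nat); lia.
  - apply IHn. intros i Hi. apply (H (S i)); lia.
Qed.

Definition c12 (x : Tn 12 R) (i : nat) : R := coord 12 x i.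
Definition W1v (x : Tn 12 R) : config := ((c12 x 0, c12 x 1), (c12 x 2, c12 x 3)).
Definition W2v (x : Tn 12 R) : config := ((c12 x 4, c12 x 5), (c12 x 6, c12 x 7)).
Definition W3v (x : Tn 12 R) : config := ((c12 x 8, c12 x 9), (c12 x 10, c12 x 11)).
Definition w2v (W1 W2 W3 : config) : Tn 12 R :=
  tn_of 12 (fun i => match i with
    | 0%nat => fst (fst W1) | 1%nat => snd (fst W1) | 2%nat => fst (snd W1) | 3%nat => snd (snd W1)
    | 4%nat => fst (fst W2) | 5%nat => snd (fst W2) | 6%nat => fst (snd W2) | 7%nat => snd (snd W2)
    | 8%nat => fst (fst W3) | 9%nat => snd (fst W3) | 10%nat => fst (snd W3) | _ => snd (snd W3) end).
Lemma w2v_1 W1 W2 W3 : W1v (w2v W1 W2 W3) = W1.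
Proof. destruct W1 as [[? ?] [? ?]]; reflexivity. Qed.
Lemma w2v_2 W1 W2 W3 : W2v (w2v W1 W2 W3) = W2.
Proof. destruct W2 as [[? ?] [? ?]]; reflexivity. Qed.
Lemma w2v_3 W1 W2 W3 : W3v (w2v W1 W2 W3) = W3.
Proof. destruct W3 as [[? ?] [? ?]]; reflexivity. Qed.

Definition lip1 (psi : Tn 12 R -> R) : Prop :=
  exists L, 0 <= L /\ forall d x t, 0 < d -> Compactness.close_n 12 d x t -> Rabs (psi x - psi t) <= L * d.

Lemma lip1_ext psi phi : lip1 psi -> (forall x, psi x = phi x) -> lip1 phi.
Proof. intros [L [L0 H]] E. exists L. split; auto. intros. rewrite <- !E. auto. Qed.
Lemma lip1_coord i : (i < 12)%nat -> lip1 (fun x => c12 x i).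
Proof. intro Hi. exists 1. split; [lra|]. intros d x t d0 C. unfold c12. pose proof (close_coord 12 d x t C i Hi). lra. Qed.
Lemma lip1_const c : lip1 (fun _ => c).
Proof. exists 0. split; [lra|]. intros. rewrite Rminus_diag, Rabs_R0. lra. Qed.
Lemma lip1_add p q : lip1 p -> lip1 q -> lip1 (fun x => p x + q x).
Proof.
  intros [L1 [L10 H1]] [L2 [L20 H2]]. exists (L1 + L2). split; [lra|]. intros d x t d0 C.
  specialize (H1 d x t d0 C). specialize (H2 d x t d0 C).
  replace (p x + q x - (p t + q t)) with ((p x - p t) + (q x - q t)) by ring.
  eapply Rle_trans; [apply Rabs_triang|]. lra.
Qed.
Lemma lip1_opp p : lip1 p -> lip1 (fun x => - p x).
Proof.
  intros [L [L0 H]]. exists L. split; auto. intros d x t d0 C.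
  replace (- p x - - p t) with (- (p x - p t)) by ring. rewrite Rabs_Ropp. auto.
Qed.
Lemma lip1_sub p q : lip1 p -> lip1 q -> lip1 (fun x => p x - q x).
Proof. intros. apply lip1_add; auto. apply lip1_opp; auto. Qed.
Lemma Rabs_abs_sub a b : Rabs (Rabs a - Rabs b) <= Rabs (a - b).
Proof. apply Rabs_triang_inv2. Qed.
Lemma lip1_abs p : lip1 p -> lip1 (fun x => Rabs (p x)).
Proof.
  intros [L [L0 H]]. exists L. split; auto. intros d x t d0 C.
  eapply Rle_trans; [apply Rabs_abs_sub|]. auto.
Qed.
Lemma lip1_max p q : lip1 p -> lip1 q -> lip1 (fun x => Rmax (p x) (q x)).
Proof.
  intros [L1 [L10 H1]] [L2 [L20 H2]]. exists (L1 + L2). split; [lra|]. intros d x t d0 C.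
  specialize (H1 d x t d0 C). specialize (H2 d x t d0 C).
  unfold Rmax. destruct (Rle_dec (p x) (q x)), (Rle_dec (p t) (q t));
  apply between_Rabs_le; apply Rabs_le_between in H1; apply Rabs_le_between in H2; lra.
Qed.

Definition lipc (F : Tn 12 R -> config) : Prop :=
  lip1 (fun x => fst (fst (F x))) /\ lip1 (fun x => snd (fst (F x))) /\
  lip1 (fun x => fst (snd (F x))) /\ lip1 (fun x => snd (snd (F x))).

Lemma lipc_W1 : lipc W1v.
Proof. repeat split; apply lip1_coord; lia. Qed.
Lemma lipc_W2 : lipc W2v.
Proof. repeat split; apply lip1_coord; lia. Qed.
Lemma lipc_W3 : lipc W3v.
Proof. repeat split; apply lip1_coord; lia. Qed.
Lemma lipc_const c : lipc (fun _ => c).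
Proof. repeat split; apply lip1_const. Qed.

Lemma lip1_ell j F : lipc F -> lip1 (fun x => ell j (F x)).
Proof. intros [a [b [c d]]]. destruct j; simpl; apply lip1_sub; auto. Qed.

Lemma lip1_dist1_fst F G : lipc F -> lipc G -> lip1 (fun x => dist1 (fst (F x)) (fst (G x))).
Proof.
  intros [a [b [c d]]] [a' [b' [c' d']]]. unfold dist1.
  apply lip1_add; apply lip1_abs; apply lip1_sub; auto.
Qed.
Lemma lip1_dist1_snd F G : lipc F -> lipc G -> lip1 (fun x => dist1 (snd (F x)) (snd (G x))).
Proof.
  intros [a [b [c d]]] [a' [b' [c' d']]]. unfold dist1.
  apply lip1_add; apply lip1_abs; apply lip1_sub; auto.
Qed.
Lemma lip1_cm F G : lipc F -> lipc G -> lip1 (fun x => cm (F x) (G x)).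
Proof. intros. unfold cm. apply lip1_max; [apply lip1_dist1_fst|apply lip1_dist1_snd]; auto. Qed.
Lemma lip1_cdist F G : lipc F -> lipc G -> lip1 (fun x => cdist (F x) (G x)).
Proof. intros. unfold cdist. apply lip1_add; [apply lip1_dist1_fst|apply lip1_dist1_snd]; auto. Qed.

Lemma lip1_cost A B : lip1 (fun x => cost A (W1v x) (W2v x) (W3v x) B).
Proof.
  unfold cost. pose proof lipc_W1. pose proof lipc_W2. pose proof lipc_W3.
  repeat apply lip1_add; apply lip1_cm; auto; apply lipc_const.
Qed.

Definition closed12 (S : Tn 12 R -> Prop) : Prop :=
  forall t, ~ S t -> exists d, 0 < d /\ forall x, Compactness.close_n 12 d x t -> ~ S x.

Lemma closed_ext P Q : closed12 P -> (forall x, P x <-> Q x) -> closed12 Q.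
Proof.
  intros H E t Nt. destruct (H t) as [d [d0 Hd]]. { rewrite E. auto. }
  exists d. split; auto. intros x C Qx. apply (Hd x C). apply E. auto.
Qed.
Lemma closed_ge psi : lip1 psi -> closed12 (fun x => 0 <= psi x).
Proof.
  intros [L [L0 H]] t Nt. apply Rnot_le_lt in Nt.
  exists (- psi t / (2 * (L + 1))). split.
  { apply Rdiv_lt_0_compat; lra. }
  intros x C Hx. assert (d0 : 0 < - psi t / (2 * (L + 1))) by (apply Rdiv_lt_0_compat; lra).
  specialize (H _ x t d0 C). apply Rabs_le_between in H.
  assert (L * (- psi t / (2 * (L + 1))) < - psi t).
  { apply (Rmult_lt_reg_r (2 * (L + 1))); [lra|]. unfold Rdiv.
    replace (L * (- psi t * / (2 * (L + 1))) * (2 * (L + 1))) with (L * (- psi t)) by (field; lra). nra. }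
  lra.
Qed.
Lemma closed_and P Q : closed12 P -> closed12 Q -> closed12 (fun x => P x /\ Q x).
Proof.
  intros HP HQ t Nt. destruct (classic (P t)) as [Pt|Pt].
  - assert (~ Q t) by tauto. destruct (HQ t H) as [d [d0 Hd]]. exists d. split; auto. intros x C [_ Qx]. apply (Hd x C Qx).
  - destruct (HP t Pt) as [d [d0 Hd]]. exists d. split; auto. intros x C [Px _]. apply (Hd x C Px).
Qed.
Lemma close_mono n d d' x t : d <= d' -> Compactness.close_n n d x t -> Compactness.close_n n d' x t.
Proof.
  revert x t. induction n; intros x t Hd C; simpl; auto. destruct x, t. simpl in C. destruct C. split; [lra|]. eauto.
Qed.
Lemma closed_or P Q : closed12 P -> closed12 Q -> closed12 (fun x => P x \/ Q x).
Proof.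
  intros HP HQ t Nt. destruct (HP t ltac:(tauto)) as [d1 [d10 H1]]. destruct (HQ t ltac:(tauto)) as [d2 [d20 H2]].
  exists (Rmin d1 d2). split; [apply Rmin_glb_lt; auto|]. intros x C [Px|Qx].
  - apply (H1 x); auto. eapply close_mono; [|exact C]. apply Rmin_l.
  - apply (H2 x); auto. eapply close_mono; [|exact C]. apply Rmin_r.
Qed.
Lemma closed_const (P : Prop) : closed12 (fun _ => P).
Proof. intros t Nt. exists 1. split; [lra|]. intros. auto. Qed.

Lemma closed_inO j F : lipc F -> closed12 (fun x => inO j (F x)).
Proof.
  intro H. eapply closed_ext. apply (closed_ge (fun x => ell j (F x) - 1)).
  apply lip1_sub; [apply lip1_ell; auto|apply lip1_const].
  intro x. unfold inO. lra.
Qed.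
Lemma closed_cdist F G : lipc F -> lipc G -> closed12 (fun x => cdist (F x) (G x) <= 0).
Proof.
  intros HF HG. eapply closed_ext. apply (closed_ge (fun x => - cdist (F x) (G x))).
  apply lip1_opp; apply lip1_cdist; auto. intro x. lra.
Qed.

Lemma closed_V A B j0 e k : closed12 (fun x => V A B j0 e k (W1v x) (W2v x) (W3v x)).
Proof.
  pose proof lipc_W1. pose proof lipc_W2. pose proof lipc_W3. pose proof (lipc_const B).
  unfold V. apply closed_and; [apply closed_const|].
  destruct k as [|[|[|k]]];
  repeat apply closed_and; first [apply closed_inO; auto | apply closed_cdist; auto | apply closed_const].
Qed.

Definition Sopt (A B : config) (C0 : R) (x : Tn 12 R) : Prop :=
  (exists j0 e k, (k <= 3)%nat /\ V A B j0 e k (W1v x) (W2v x) (W3v x)) /\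
  0 <= C0 - cost A (W1v x) (W2v x) (W3v x) B.

Lemma closed_Sopt A B C0 : closed12 (Sopt A B C0).
Proof.
  unfold Sopt. apply closed_and.
  2:{ apply closed_ge. apply lip1_sub; [apply lip1_const|apply lip1_cost]. }
  set (Vk := fun j0 e k x => V A B j0 e k (W1v x) (W2v x) (W3v x)).
  assert (Hb : forall j0 e, closed12 (fun x => exists k, (k <= 3)%nat /\ Vk j0 e k x)).
  { intros j0 e. apply (closed_ext (fun x => Vk j0 e 0%nat x \/ Vk j0 e 1%nat x \/ Vk j0 e 2%nat x \/ Vk j0 e 3%nat x)).
    - repeat apply closed_or; apply closed_V.
    - intro x. split.
      + intros [h|[h|[h|h]]]; eexists; split; [|exact h| |exact h| |exact h| |exact h]; lia.
      + intros [k [Hk h]]. destruct k as [|[|[|[|k]]]]; auto; lia. }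
  assert (He : forall j0, closed12 (fun x => exists e k, (k <= 3)%nat /\ Vk j0 e k x)).
  { intro j0. apply (closed_ext (fun x => (exists k, (k <= 3)%nat /\ Vk j0 true k x) \/ (exists k, (k <= 3)%nat /\ Vk j0 false k x))).
    - apply closed_or; apply Hb.
    - intro x. split.
      + intros [[k h]|[k h]]; eauto.
      + intros [e h]. destruct e; auto. }
  apply (closed_ext (fun x => (exists e k, (k <= 3)%nat /\ Vk oR e k x) \/ (exists e k, (k <= 3)%nat /\ Vk oU e k x) \/
                              (exists e k, (k <= 3)%nat /\ Vk oL e k x) \/ (exists e k, (k <= 3)%nat /\ Vk oD e k x))).
  - repeat apply closed_or; apply He.
  - intro x. split.
    + intros [h|[h|[h|h]]]; eauto.
    + intros [j0 h]. destruct j0; auto.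
Qed.


Ltac wit k W1 W2 W3 :=
  exists true, k, W1, W2, W3; split; [lia|]; split; [auto|]; simpl;
  unfold cdist; rewrite ?dist1_refl; unfold inO in *; simpl in *; repeat split; lra.

Lemma witness A B j0 jB : inO j0 A -> inO jB B ->
  exists e k W1 W2 W3, (k <= 3)%nat /\ V A B j0 e k W1 W2 W3.
Proof.
  intros HA HB. destruct j0, jB.
  - wit 0%nat B B B.
  - wit 1%nat ((1,1),(0,0)) B B.
  - wit 2%nat ((1,1),(0,0)) ((-1,1),(0,0)) B.
  - wit 3%nat ((1,1),(0,0)) ((-1,1),(0,0)) ((-1,-1),(0,0)).
  - wit 3%nat ((-1,1),(0,0)) ((-1,-1),(0,0)) ((1,-1),(0,0)).
  - wit 0%nat B B B.
  - wit 1%nat ((-1,1),(0,0)) B B.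
  - wit 2%nat ((-1,1),(0,0)) ((-1,-1),(0,0)) B.
  - wit 2%nat ((-1,-1),(0,0)) ((1,-1),(0,0)) B.
  - wit 3%nat ((-1,-1),(0,0)) ((1,-1),(0,0)) ((1,1),(0,0)).
  - wit 0%nat B B B.
  - wit 1%nat ((-1,-1),(0,0)) B B.
  - wit 1%nat ((1,-1),(0,0)) B B.
  - wit 2%nat ((1,-1),(0,0)) ((1,1),(0,0)) B.
  - wit 3%nat ((1,-1),(0,0)) ((1,1),(0,0)) ((-1,1),(0,0)).
  - wit 0%nat B B B.
Qed.

Definition Ac (A : config) (i : nat) : R :=
  match i with
  | 0%nat | 4%nat | 8%nat => fst (fst A)
  | 1%nat | 5%nat | 9%nat => snd (fst A)
  | 2%nat | 6%nat | 10%nat => fst (snd A)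
  | _ => snd (snd A) end.

Lemma box A P C0 : cm A P <= C0 ->
  (fst (fst A) - C0 <= fst (fst P) <= fst (fst A) + C0) /\ (snd (fst A) - C0 <= snd (fst P) <= snd (fst A) + C0) /\
  (fst (snd A) - C0 <= fst (snd P) <= fst (snd A) + C0) /\ (snd (snd A) - C0 <= snd (snd P) <= snd (snd A) + C0).
Proof.
  intro H. pose proof (cm_fst A P). pose proof (cm_snd A P).
  pose proof (dist1_x (fst A) (fst P)). pose proof (dist1_y (fst A) (fst P)).
  pose proof (dist1_x (snd A) (snd P)). pose proof (dist1_y (snd A) (snd P)).
  repeat match goal with h : Rabs _ <= _ |- _ => apply Rabs_le_between in h end.
  repeat split; lra.
Qed.

Lemma Sopt_bounded A B C0 x : Sopt A B C0 x ->
  Compactness.bounded_n 12 (tn_of 12 (fun i => Ac A i - C0)) (tn_of 12 (fun i => Ac A i + C0)) x.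
Proof.
  intros [_ Hc]. unfold cost in Hc.
  pose proof (cm_ge0 A (W1v x)). pose proof (cm_ge0 (W1v x) (W2v x)).
  pose proof (cm_ge0 (W2v x) (W3v x)). pose proof (cm_ge0 (W3v x) B).
  pose proof (cm_tri A (W1v x) (W2v x)). pose proof (cm_tri A (W2v x) (W3v x)).
  destruct (box A (W1v x) C0 ltac:(lra)) as [a0 [a1 [a2 a3]]].
  destruct (box A (W2v x) C0 ltac:(lra)) as [b0 [b1 [b2 b3]]].
  destruct (box A (W3v x) C0 ltac:(lra)) as [c0 [c1 [c2 c3]]].
  unfold W1v, W2v, W3v, c12 in a0, a1, a2, a3, b0, b1, b2, b3, c0, c1, c2, c3. simpl fst in *; simpl snd in *.
  apply bounded_of. intros i Hi. rewrite !coord_tn_of by lia.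
  do 12 (destruct i as [|i]; [simpl Ac; auto|]). lia.
Qed.

Lemma final_sched W :
  (forall i, (i < 4)%nat -> exists j, inO j (W i) /\ inO j (W (S i))) -> (forall j, Cont j W) ->
  feasible_schedule (sch fst W) (sch snd W) 0 (tm W 4) (W 0%nat) (W 4%nat) /\
  no_repeat_ordering (sch fst W) (sch snd W) 0 (tm W 4) ord_right /\
  no_repeat_ordering (sch fst W) (sch snd W) 0 (tm W 4) ord_left /\
  no_repeat_ordering (sch fst W) (sch snd W) 0 (tm W 4) ord_up /\
  no_repeat_ordering (sch fst W) (sch snd W) 0 (tm W 4) ord_down.
Proof.
  intros H1 H2. split; [apply sched_ok; auto|].
  assert (G : forall (O : config -> Prop) j, (forall c, O c <-> inO j c) ->
            no_repeat_ordering (sch fst W) (sch snd W) 0 (tm W 4) O).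
  { intros O j E. unfold no_repeat_ordering. cbv zeta. right.
    apply (is_interval_ext _ _ (fun t => conj (fun h => conj (proj1 h) (proj2 (E _) (eq_rect _ (inO j) (proj2 h) _ (eq_sym (sch_pair W t)))))
                                          (fun h => conj (proj1 h) (eq_rect _ (inO j) (proj1 (E _) (proj2 h)) _ (sch_pair W t))))).
    apply csch_SI. apply H2. }
  split; [apply (G _ oR ord_right_iff)|]. split; [apply (G _ oL ord_left_iff)|].
  split; [apply (G _ oU ord_up_iff)|apply (G _ oD ord_down_iff)].
Qed.

Theorem corollary3p2 :
  forall A B : config, F2 A -> F2 B ->
  exists (m1 m2 : R -> pt) (t0 t1 : R),
    feasible_schedule m1 m2 t0 t1 A B /\
    (forall (n1 n2 : R -> pt) (s0 s1 : R),
        feasible_schedule n1 n2 s0 s1 A B -> t1 - t0 <= s1 - s0) /\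
    no_repeat_ordering m1 m2 t0 t1 ord_right /\
    no_repeat_ordering m1 m2 t0 t1 ord_left /\
    no_repeat_ordering m1 m2 t0 t1 ord_up /\
    no_repeat_ordering m1 m2 t0 t1 ord_down.
Proof.
  intros A B FA FB.
  destruct (classic (exists j, inO j A /\ inO j B)) as [[j [IA IB]] | NS'].
  - set (W := Wv A B B B B).
    assert (HV : V A B j true 0 B B B).
    { split; auto. unfold cdist. rewrite dist1_refl, dist1_refl. repeat split; auto; lra. }
    destruct (route_ok A B j true 0 B B B ltac:(lia) HV ltac:(lia)) as [H1 H2].
    destruct (final_sched W H1 H2) as [Hf [N1 [N2 [N3 N4]]]].
    exists (sch fst W), (sch snd W), 0, (tm W 4). split; [exact Hf|]. split; [|auto].
    intros n1 n2 s0 s1 [Hs [[L1 _] [[L2 _] [HF [EA EB]]]]].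
    simpl. unfold W, Wv. rewrite !cm_refl.
    pose proof (cm_time n1 n2 s0 s1 s0 s1 L1 L2 ltac:(lra) Hs ltac:(lra)). rewrite EA, EB in H. lra.
  - assert (HNS : NS A B) by (intros j a b; apply NS'; eauto).
    destruct (F2_inO A FA) as [j0 IA]. destruct (F2_inO B FB) as [jB IB].
    destruct (witness A B j0 jB IA IB) as [e [k [W1 [W2 [W3 [Hk HV]]]]]].
    set (C0 := cost A W1 W2 W3 B).
    assert (S0 : Sopt A B C0 (w2v W1 W2 W3)).
    { split; [exists j0, e, k; rewrite w2v_1, w2v_2, w2v_3; auto|]. rewrite w2v_1, w2v_2, w2v_3. unfold C0. lra. }
    destruct (evt 12 _ _ (Sopt A B C0) (fun x => cost A (W1v x) (W2v x) (W3v x) B)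
                 (Sopt_bounded A B C0) (closed_Sopt A B C0)) as [xs [Sxs Hmin]].
    { intros t eps Heps. destruct (lip1_cost A B) as [L [L0 HL]].
      exists (eps / (L + 1)). split; [apply Rdiv_lt_0_compat; lra|].
      intros x C. assert (d0 : 0 < eps / (L + 1)) by (apply Rdiv_lt_0_compat; lra).
      specialize (HL _ x t d0 C). apply Rabs_le_between in HL.
      assert (L * (eps / (L + 1)) < eps).
      { apply (Rmult_lt_reg_r (L + 1)); [lra|]. unfold Rdiv.
        replace (L * (eps * / (L + 1)) * (L + 1)) with (L * eps) by (field; lra). nra. }
      lra. }
    { intros x _. unfold cost. pose proof (cm_ge0 A (W1v x)). pose proof (cm_ge0 (W1v x) (W2v x)).
      pose proof (cm_ge0 (W2v x) (W3v x)). pose proof (cm_ge0 (W3v x) B). lra. }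
    { exists (w2v W1 W2 W3). exact S0. }
    destruct Sxs as [[j1 [e1 [k1 [Hk1 HV1]]]] Cxs].
    set (W := Wv A (W1v xs) (W2v xs) (W3v xs) B).
    destruct (route_ok A B j1 e1 k1 _ _ _ Hk1 HV1 (fun _ => HNS)) as [H1 H2].
    destruct (final_sched W H1 H2) as [Hf [N1 [N2 [N3 N4]]]].
    exists (sch fst W), (sch snd W), 0, (tm W 4). split; [exact Hf|]. split; [|auto].
    intros n1 n2 s0 s1 Hf'.
    destruct (extract n1 n2 s0 s1 A B Hf' HNS) as [j' [e' [k' [W1' [W2' [W3' [Hk' [HV' Hc']]]]]]]].
    assert (E : tm W 4 - 0 = cost A (W1v xs) (W2v xs) (W3v xs) B) by (simpl; unfold cost; ring).
    rewrite E.
    destruct (Rle_dec (cost A W1' W2' W3' B) C0) as [h|h].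
    + assert (S' : Sopt A B C0 (w2v W1' W2' W3')).
      { split; [exists j', e', k'; rewrite w2v_1, w2v_2, w2v_3; auto|]. rewrite w2v_1, w2v_2, w2v_3. lra. }
      specialize (Hmin _ S'). simpl in Hmin. rewrite w2v_1, w2v_2, w2v_3 in Hmin. lra.
    + lra.
Qed.

Print Assumptions corollary3p2.
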